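(* Let $\Lambda$ be a unital commutative ring, $q$ a non-negative integer, $\Lambda_q=\Lambda/q\Lambda$, and $\mathfrak g$ a Lie algebra over $\Lambda$ such that $\mathfrak g/(\mathfrak g\#_q\mathfrak g)$ is a free $\Lambda_q$-module. Let $i\colon\Gamma\big(\mathfrak g/(\mathfrak g\#_q\mathfrak g)\big)\to\mathfrak g\otimes^q\mathfrak g$ be the homomorphism $i\big(\gamma(g+\mathfrak g\#_q\mathfrak g)\big)=g\otimes g$, and let $p\colon\mathfrak g\otimes^q\mathfrak g\to\big(\mathfrak g/(\mathfrak g\#_q\mathfrak g)\big)\otimes^q\big(\mathfrak g/(\mathfrak g\#_q\mathfrak g)\big)$ be the canonical projection. Then $i\big(\Gamma(\mathfrak g/(\mathfrak g\#_q\mathfrak g))\big)\cap\operatorname{Ker}p=\{0\}$.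
   Context: All Lie algebras are over $\Lambda$. $\mathfrak g\#_q\mathfrak g$ is the $\Lambda$-submodule (an ideal) of $\mathfrak g$ generated by all $[h,g]$ and $qh'$, $h,h',g\in\mathfrak g$. Non-abelian $q$-tensor square: for $q\ge1$, $\mathfrak g\otimes^q\mathfrak g$ is the Lie algebra generated by symbols $h\otimes g$ and $\{h\}$ ($h,g\in\mathfrak g$) subject to, for all $h,h',g,g'\in\mathfrak g$, $\lambda,\lambda'\in\Lambda$: (1) $\lambda(h\otimes g)=\lambda h\otimes g=h\otimes\lambda g$; (2) $(h+h')\otimes g=h\otimes g+h'\otimes g$; (3) $h\otimes(g+g')=h\otimes g+h\otimes g'$; (4) $[h,h']\otimes g=h\otimes[h',g]-h'\otimes[h,g]$; (5) $h\otimes[g,g']=[g',h]\otimes g-[g,h]\otimes g'$; (6) $[h\otimes g,h'\otimes g']=[h,g]\otimes[h',g']$; (7) $[\{h'\},h\otimes g]=[qh',h]\otimes g+h\otimes[qh',g]$; (8) $\{\lambda h+\lambda'h'\}=\lambda\{h\}+\lambda'\{h'\}$; (9) $[\{h\},\{h'\}]=qh\otimes qh'$; (10) $\{[h,g]\}=q(h\otimes g)$. For $q=0$, generated by the $h\otimes g$ subject to (1)–(6) only. The map $p$ is induced by the quotient map $\mathfrak g\to\mathfrak g/(\mathfrak g\#_q\mathfrak g)$. Whitehead's quadratic functor: for a $\Lambda$-module $A$, $\Gamma(A)$ is the $\Lambda$-module generated by $\gamma(a)$, $a\in A$, subject to $\lambda^2\gamma(a)=\gamma(\lambda a)$; $\gamma(a+b+c)+\gamma(a)+\gamma(b)+\gamma(c)=\gamma(a+b)+\gamma(a+c)+\gamma(b+c)$;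 $\gamma(\lambda a+b)+\lambda\gamma(a)+\lambda\gamma(b)=\lambda\gamma(a+b)+\gamma(\lambda a)+\gamma(b)$. *)

(* Defs.v *)
From HB Require Import structures.
From mathcomp Require Import all_boot all_order all_algebra.
Set Implicit Arguments. Unset Strict Implicit. Unset Printing Implicit Defensive.
Import GRing.Theory.
Local Open Scope ring_scope.

Section Defs.
Variable R : comPzRingType.

Definition lin (U V : lmodType R) (f : U -> V) : Prop :=
  forall (a : R) (x y : U), f (a *: x + y) = a *: f x + f y.

Record lie_axioms (L : lmodType R) (br : L -> L -> L) : Prop := {
  lie_linl : forall z (a : R) x y, br (a *: x + y) z = a *: br x z + br y z;
  lie_linr : forall x (a : R) y z, br x (a *: y + z) = a *: br x y + br x z;
  lie_alt  : forall x, br x x = 0;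
  lie_jacobi : forall x y z, br x (br y z) + br y (br z x) + br z (br x y) = 0 }.

Definition lie_hom (L L' : lmodType R) (br : L -> L -> L) (br' : L' -> L' -> L')
  (f : L -> L') : Prop := lin f /\ forall x y, f (br x y) = br' (f x) (f y).

Definition submod_P (L : lmodType R) (P : L -> Prop) : Prop :=
  P 0 /\ (forall x y, P x -> P y -> P (x + y)) /\ (forall (a : R) x, P x -> P (a *: x)).

Definition qsharp (q : nat) (L : lmodType R) (br : L -> L -> L) (x : L) : Prop :=
  forall P : L -> Prop, submod_P P -> (forall h g, P (br h g)) ->
    (forall h, P (h *+ q)) -> P x.

Definition is_quotient_by (L Q : lmodType R) (I : L -> Prop) (pi : L -> Q) : Prop :=
  lin pi /\ (forall y, exists x, pi x = y) /\ (forall x, pi x = 0 <-> I x).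

(* Q (a Lambda-module killed by q) is free as a Lambda_q = Lambda/q Lambda-module:
   it has a family e spanning it, linearly independent modulo q Lambda. *)
Definition free_mod_q (q : nat) (Q : lmodType R) : Prop :=
  exists (J : eqType) (e : J -> Q),
    (forall x, exists (s : seq J) (c : J -> R), x = \sum_(j <- s) c j *: e j) /\
    (forall (s : seq J) (c : J -> R), uniq s -> \sum_(j <- s) c j *: e j = 0 ->
       forall j, j \in s -> exists r : R, c j = q%:R * r).

Definition gamma_rel (A M : lmodType R) (ga : A -> M) : Prop :=
  (forall (l : R) a, ga (l *: a) = (l * l) *: ga a) /\
  (forall a b c, ga (a + b + c) + ga a + ga b + ga c = ga (a + b) + ga (a + c) + ga (b + c)) /\
  (forall (l : R) a b, ga (l *: a + b) + l *: ga a + l *: ga b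
                       = l *: ga (a + b) + ga (l *: a) + ga b).

Definition is_Gamma (A G : lmodType R) (ga : A -> G) : Prop :=
  gamma_rel ga /\
  forall (M : lmodType R) (f : A -> M), gamma_rel f ->
    exists phi : G -> M, lin phi /\ (forall a, phi (ga a) = f a) /\
      forall psi : G -> M, lin psi -> (forall a, psi (ga a) = f a) -> forall y, psi y = phi y.

(* Defining relations (1)-(10) of the non-abelian q-tensor square; for q = 0
   only (1)-(6) are imposed, and the symbols {h} are forced to be 0 (so they
   generate nothing). t h g stands for h (x) g, c h for {h}. *)
Definition qtens_rel (q : nat) (L : lmodType R) (brL : L -> L -> L)
  (T : lmodType R) (brT : T -> T -> T) (t : L -> L -> T) (c : L -> T) : Prop :=
  (forall (l : R) h g, l *: t h g = t (l *: h) g /\ t (l *: h) g = t h (l *: g)) /\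
  (forall h h' g, t (h + h') g = t h g + t h' g) /\
  (forall h g g', t h (g + g') = t h g + t h g') /\
  (forall h h' g, t (brL h h') g = t h (brL h' g) - t h' (brL h g)) /\
  (forall h g g', t h (brL g g') = t (brL g' h) g - t (brL g h) g') /\
  (forall h g h' g', brT (t h g) (t h' g') = t (brL h g) (brL h' g')) /\
  (if q == 0%N then forall h, c h = 0 else
   (forall h' h g, brT (c h') (t h g) = t (brL (h' *+ q) h) g + t h (brL (h' *+ q) g)) /\
   (forall (l l' : R) h h', c (l *: h + l' *: h') = l *: c h + l' *: c h') /\
   (forall h h', brT (c h) (c h') = t (h *+ q) (h' *+ q)) /\
   (forall h g, c (brL h g) = t h g *+ q)).

(* (T, brT, t, c) is the non-abelian q-tensor square of (L, brL): the Lie algebra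
   presented by the generators and relations above, characterised by its
   universal property (initial object). *)
Definition is_qtensor (q : nat) (L : lmodType R) (brL : L -> L -> L)
  (T : lmodType R) (brT : T -> T -> T) (t : L -> L -> T) (c : L -> T) : Prop :=
  lie_axioms brT /\ qtens_rel q brL brT t c /\
  forall (T' : lmodType R) (brT' : T' -> T' -> T') (t' : L -> L -> T') (c' : L -> T'),
    lie_axioms brT' -> qtens_rel q brL brT' t' c' ->
    exists phi : T -> T', lie_hom brT brT' phi /\
      (forall h g, phi (t h g) = t' h g) /\ (forall h, phi (c h) = c' h) /\
      forall psi : T -> T', lie_hom brT brT' psi ->
        (forall h g, psi (t h g) = t' h g) -> (forall h, psi (c h) = c' h) ->
        forall x, psi x = phi x.

End Defs.

(* Main.v *)
Require Import Defs.
From mathcomp Require Import all_boot all_order all_algebra.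
From Stdlib Require Import ClassicalEpsilon FunctionalExtensionality PropExtensionality ProofIrrelevance.
Set Implicit Arguments. Unset Strict Implicit.
Import GRing.Theory.
Local Open Scope ring_scope.

Ltac mk a r kont :=
  lazymatch r with
  | ?x + ?s => tryif unify x a then kont constr:(@erefl _ r) else
       mk a s ltac:(fun H =>
         lazymatch type of H with _ = ?m + ?s' =>
           kont constr:(eq_trans (f_equal (fun y => x + y) H) (addrCA x m s')) end)
  | _ => tryif unify r a then kont constr:(esym (addr0 r)) else fail
  end.

Ltac zc :=
  lazymatch goal with
  | |- 0 = 0 => reflexivity
  | |- ?a + ?l = 0 => let na := lazymatch a with - ?y => y | _ => constr:(- a) end in
      mk na l ltac:(fun H =>
      apply: (eq_trans (f_equal (fun x => a + x) H)); rewrite ?addNKr ?addKr ?opprK ?addr0; zc)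
  end.

Ltac zsolve := apply/eqP; rewrite -subr_eq0; apply/eqP;
  rewrite ?opprD ?opprK ?oppr0 ?addr0 ?add0r -?addrA; zc.


Section Free.
Variables (R : comPzRingType) (J : eqType).

Lemma sum_pred1 (M : lmodType R) (Y : J -> M) (u : seq J) i :
  uniq u -> i \in u -> \sum_(j <- u) (if i == j then Y j else 0) = Y i.
Proof.
elim: u => [|j u IH] //= /andP[ju uu]; rewrite in_cons big_cons.
case: eqP => [eij|/eqP nij] /= iu.
  subst j; rewrite big1_seq ?addr0 // => x /= xu; case: eqP => // ix; subst x.
  by rewrite xu in ju.
by rewrite add0r IH.
Qed.

Lemma agg (M : lmodType R) (X : J -> M) (s u : seq J) (c : J -> R) :
  uniq u -> {subset s <= u} ->
  \sum_(i <- s) c i *: X i = \sum_(j <- u) (\sum_(i <- s | i == j) c i) *: X j.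
Proof.
move=> uu; elim: s => [|i s IH] sub.
  by rewrite big_nil big1 // => j _; rewrite big_nil scale0r.
rewrite big_cons IH; last by move=> x xs; apply: sub; rewrite in_cons xs orbT.
have iu : i \in u by apply: sub; rewrite in_cons eqxx.
rewrite -(sum_pred1 (fun j => c i *: X j) uu iu) -big_split /=.
apply: eq_bigr => j _; rewrite big_cons; case: eqP => [->|_].
  by rewrite scalerDl addrC.
by rewrite add0r.
Qed.

Variables (q : nat) (Q : lmodType R) (e : J -> Q).
Hypothesis span : forall x, exists (s : seq J) (c : J -> R), x = \sum_(j <- s) c j *: e j.
Hypothesis indep : forall (s : seq J) (c : J -> R), uniq s -> \sum_(j <- s) c j *: e j = 0 ->
       forall j, j \in s -> exists r : R, c j = q%:R * r.

Definition reps x : seq J := proj1_sig (constructive_indefinite_description _ (span x)).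
Definition repc x : J -> R := proj1_sig (constructive_indefinite_description _
   (proj2_sig (constructive_indefinite_description _ (span x)))).
Lemma rep_spec x : x = \sum_(j <- reps x) repc x j *: e j.
Proof.
rewrite /repc /reps.
case: (constructive_indefinite_description _ (span x)) => s /= Hs.
by case: (constructive_indefinite_description _ Hs).
Qed.

Section Target.
Variable M : lmodType R.

Definition killed (E : J -> M) := forall j, E j *+ q = 0.

Lemma wd (E : J -> M) : killed E -> forall s c s' c',
  \sum_(j <- s) c j *: e j = \sum_(j <- s') c' j *: e j ->
  \sum_(j <- s) c j *: E j = \sum_(j <- s') c' j *: E j.
Proof.
move=> kE s c s' c' H.
set u := undup (s ++ s').
have uu : uniq u by apply: undup_uniq.
have ss : {subset s <= u} by move=> x xs; rewrite mem_undup mem_cat xs.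
have ss' : {subset s' <= u} by move=> x xs; rewrite mem_undup mem_cat xs orbT.
set d := fun j => \sum_(i <- s | i == j) c i - \sum_(i <- s' | i == j) c' i.
have He : \sum_(j <- u) d j *: e j = 0.
  rewrite /d; under eq_bigr do rewrite scalerBl.
  by rewrite sumrB -!agg // H subrr.
apply/eqP; rewrite -subr_eq0; apply/eqP.
rewrite (agg _ c uu ss) (agg _ c' uu ss') -sumrB.
rewrite big1_seq // => j /= ju; rewrite -scalerBl.
have [r hr] := indep uu He ju; rewrite /d /= in hr; rewrite hr.
by rewrite mulrC -scalerA scaler_nat kE scaler0.
Qed.

Definition F (E : J -> M) (x : Q) : M := \sum_(j <- reps x) repc x j *: E j.

Lemma F_sum E : killed E -> forall s c, F E (\sum_(j <- s) c j *: e j) = \sum_(j <- s) c j *: E j.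
Proof. by move=> kE s c; apply: wd => //; rewrite -rep_spec. Qed.

Lemma common x y : exists u cx cy, uniq u /\ x = \sum_(j <- u) cx j *: e j /\ y = \sum_(j <- u) cy j *: e j.
Proof.
set u := undup (reps x ++ reps y).
have uu : uniq u by apply: undup_uniq.
have ss : {subset reps x <= u} by move=> z xs; rewrite mem_undup mem_cat xs.
have ss' : {subset reps y <= u} by move=> z xs; rewrite mem_undup mem_cat xs orbT.
exists u; eexists; eexists; split; first exact uu.
by split; [rewrite {1}(rep_spec x) (agg _ _ uu ss) | rewrite {1}(rep_spec y) (agg _ _ uu ss')].
Qed.

Lemma F_lin E : killed E -> lin (F E).
Proof.
move=> kE a x y; have [u [cx [cy [uu [-> ->]]]]] := common x y.
rewrite scaler_sumr -big_split /=.
under eq_bigr do rewrite scalerA -scalerDl.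
rewrite !F_sum // scaler_sumr -big_split /=.
by apply: eq_bigr => j _; rewrite scalerA scalerDl.
Qed.

Lemma F_killed E : killed E -> forall x, F E x *+ q = 0.
Proof.
move=> kE x; rewrite /F -sumrMnl big1_seq // => j _.
by rewrite scalerMnr kE scaler0.
Qed.

Lemma F_linE (a : R) E E' x : F (fun j => a *: E j + E' j) x = a *: F E x + F E' x.
Proof.
rewrite /F scaler_sumr -big_split /=; apply: eq_bigr => j _.
by rewrite scalerDr !scalerA mulrC.
Qed.

End Target.

Lemma F_ext (M : lmodType R) (E E' : J -> M) x : (forall j, E j = E' j) -> F E x = F E' x.
Proof. by move=> h; apply: eq_bigr => j _; rewrite h. Qed.

Lemma cid_ext (P P' : J -> Prop) (h : exists x, P x) (h' : exists x, P' x) :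
  P = P' -> proj1_sig (constructive_indefinite_description _ h)
          = proj1_sig (constructive_indefinite_description _ h').
Proof. by move=> E; subst P'; rewrite (proof_irrelevance _ h h'). Qed.

Definition pick2 (j j' : J) : J := proj1_sig (constructive_indefinite_description
   (fun x => x = j \/ x = j') (ex_intro _ j (or_introl erefl))).

Lemma pick2C j j' : pick2 j j' = pick2 j' j.
Proof.
apply: cid_ext; apply: functional_extensionality => x.
by apply: propositional_extensionality; tauto.
Qed.

Lemma pick2P j j' : pick2 j j' = j \/ pick2 j j' = j'.
Proof. by rewrite /pick2; case: (constructive_indefinite_description _ _). Qed.

Section Quad.
Variables (M : lmodType R) (k : Q -> M).
Hypothesis hk : gamma_rel k.
Hypothesis Qk : forall x : Q, x *+ q = 0.
Hypothesis kk : forall a, k a *+ q = 0.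

Definition beta a b := k (a + b) - k a - k b.
Lemma k0 : k 0 = 0.
Proof. by have := hk.1 0 0; rewrite scale0r mul0r scale0r. Qed.
Lemma betaC a b : beta a b = beta b a.
Proof. by rewrite /beta [b + a]addrC addrAC. Qed.
Lemma betaDl a b c : beta (a + b) c = beta a c + beta b c.
Proof.
have H := hk.2.1 a b c.
rewrite /beta.
have -> : k (a + b + c) = k (a + b) + k (a + c) + k (b + c) - k c - k b - k a by rewrite -H !addrK.
zsolve.
Qed.
Lemma betaZl (l : R) a b : beta (l *: a) b = l *: beta a b.
Proof.
have H := hk.2.2 l a b.
rewrite /beta.
have -> : k (l *: a + b) = l *: k (a + b) + k (l *: a) + k b - l *: k b - l *: k a by rewrite -H !addrK.
rewrite !scalerBr; zsolve.
Qed.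
Lemma betaDr a b c : beta a (b + c) = beta a b + beta a c.
Proof. by rewrite betaC betaDl !(betaC a). Qed.
Lemma betaZr (l : R) a b : beta a (l *: b) = l *: beta a b.
Proof. by rewrite betaC betaZl betaC. Qed.
Lemma beta0r a : beta a 0 = 0.
Proof. by rewrite /beta addr0 k0 subr0 subrr. Qed.
Lemma beta0l a : beta 0 a = 0.
Proof. by rewrite betaC beta0r. Qed.
Lemma betaMnl a b n : beta (a *+ n) b = beta a b *+ n.
Proof. by elim: n => [|n IH]; rewrite ?mulr0n ?beta0l // !mulrS betaDl IH. Qed.
Lemma beta_sumr a (s : seq J) (G : J -> Q) :
  beta a (\sum_(j <- s) G j) = \sum_(j <- s) beta a (G j).
Proof. by elim: s => [|j s IH]; rewrite ?big_nil ?beta0r // !big_cons betaDr IH. Qed.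
Lemma kD a b : k (a + b) = k a + k b + beta a b.
Proof. rewrite /beta; zsolve. Qed.
Lemma betak a b : beta a b *+ q = 0.
Proof. by rewrite -betaMnl Qk beta0l. Qed.

Definition Ent (j j' : J) : M :=
  if j == j' then k (e j) else if pick2 j j' == j then beta (e j) (e j') else 0.

Lemma Ent_killed j' : killed (fun j => Ent j j').
Proof. move=> j; rewrite /Ent; case: eqP => _; first exact: kk.
by case: eqP => _; rewrite ?betak ?mul0rn. Qed.

Lemma Ent_sym j j' : j != j' -> Ent j j' + Ent j' j = beta (e j) (e j').
Proof.
move=> neq; have neq' : j' != j by rewrite eq_sym.
rewrite /Ent (negbTE neq) (negbTE neq') (pick2C j' j).
by case: (pick2P j j') => ->; rewrite eqxx ?(negbTE neq) ?(negbTE neq') ?addr0 ?add0r // betaC.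
Qed.

Definition col (a : Q) : J -> M := fun j' => F (fun j => Ent j j') a.
Definition Bf (a b : Q) : M := F (col a) b.

Lemma col_killed a : killed (col a).
Proof. by move=> j; apply: F_killed; apply: Ent_killed. Qed.

Lemma Bf_linr a : lin (Bf a).
Proof. exact: F_lin (col_killed a). Qed.

Lemma Bf_linl b : lin (fun a => Bf a b).
Proof.
move=> l a a'; rewrite /Bf -F_linE; apply: F_ext => j'.
by rewrite /col (F_lin (Ent_killed j')).
Qed.

Lemma diag (c : J -> R) (u : seq J) : uniq u ->
  \sum_(j' <- u) c j' *: \sum_(j <- u) c j *: Ent j j' = k (\sum_(j <- u) c j *: e j).
Proof.
elim: u => [|j0 u IH]; first by rewrite !big_nil k0.
move=> /= /andP[j0u uu].
rewrite !big_cons kD -IH // hk.1 beta_sumr.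
have L1 : \sum_(j' <- u) c j' *: \sum_(j <- j0 :: u) c j *: Ent j j'
   = \sum_(j' <- u) c j0 *: (c j' *: Ent j0 j') + \sum_(j' <- u) c j' *: \sum_(j <- u) c j *: Ent j j'.
  rewrite -big_split /=; apply: eq_bigr => j' _.
  by rewrite big_cons scalerDr !scalerA [c j0 * _]mulrC.
have L2 : \sum_(j <- u) beta (c j0 *: e j0) (c j *: e j)
   = \sum_(j <- u) c j0 *: (c j *: Ent j0 j) + \sum_(j <- u) c j0 *: (c j *: Ent j j0).
  rewrite -big_split /=; apply: eq_big_seq => j ju.
  rewrite betaZl betaZr -Ent_sym; last by apply/eqP => E; rewrite E ju in j0u.
  by rewrite !scalerDr.
rewrite L1 L2.
have -> : Ent j0 j0 = k (e j0) by rewrite /Ent eqxx.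
rewrite scalerDr scalerA scaler_sumr; zsolve.
Qed.
Lemma Bf_diag a : Bf a a = k a.
Proof.
have [u [c [_ [uu [ha _]]]]] := common a a.
rewrite /Bf {2}ha F_sum; last exact: col_killed.
rewrite [in RHS]ha -(diag c uu); apply: eq_bigr => j' _.
by rewrite /col {1}ha F_sum //; exact: Ent_killed.
Qed.

End Quad.
End Free.

Section LinFacts.
Variable R : comPzRingType.
Lemma lin0 (U V : lmodType R) (f : U -> V) : lin f -> f 0 = 0.
Proof.
move=> hf; have := hf 1 0 0; rewrite scaler0 addr0 scale1r => H.
by apply: (@addrI _ (f 0)); rewrite addr0 -H.
Qed.
Lemma lin_add (U V : lmodType R) (f : U -> V) : lin f -> forall x y, f (x + y) = f x + f y.
Proof. by move=> hf x y; have := hf 1 x y; rewrite !scale1r. Qed.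
Lemma lin_scale (U V : lmodType R) (f : U -> V) : lin f -> forall a x, f (a *: x) = a *: f x.
Proof. by move=> hf a x; have := hf a x 0; rewrite addr0 (lin0 hf) addr0. Qed.
Lemma lin_Mn (U V : lmodType R) (f : U -> V) : lin f -> forall x n, f (x *+ n) = f x *+ n.
Proof.
move=> hf x; elim=> [|n IH]; first by rewrite !mulr0n (lin0 hf).
by rewrite !mulrS (lin_add hf) IH.
Qed.
Lemma lin_comp (U V W : lmodType R) (f : U -> V) (g : V -> W) :
  lin f -> lin g -> lin (fun z => g (f z)).
Proof. by move=> hf hg a x y; rewrite hf hg. Qed.
Lemma gamma_comp (A U V : lmodType R) (ga : A -> U) (f : U -> V) :
  lin f -> gamma_rel ga -> gamma_rel (fun a => f (ga a)).
Proof.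
move=> hf [h1 [h2 h3]]; split; [|split].
- by move=> l a; rewrite h1 (lin_scale hf).
- by move=> a b c; have := congr1 f (h2 a b c); rewrite !(lin_add hf).
- by move=> l a b; have := congr1 f (h3 l a b); rewrite !(lin_add hf) !(lin_scale hf).
Qed.
End LinFacts.

Theorem lemma5p2 (R : comPzRingType) (q : nat)
  (g : lmodType R) (brg : g -> g -> g) (Hg : lie_axioms brg)
  (* Q = g / (g #_q g) with its (induced) Lie structure and projection pi *)
  (Q : lmodType R) (brQ : Q -> Q -> Q) (HQ : lie_axioms brQ) (pi : g -> Q)
  (Hpi : is_quotient_by (qsharp q brg) pi) (Hpihom : lie_hom brg brQ pi)
  (Hfree : free_mod_q q Q)
  (* Gamma(Q) *)
  (G : lmodType R) (ga : Q -> G) (HG : is_Gamma ga)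
  (* g (x)^q g and Q (x)^q Q *)
  (T : lmodType R) (brT : T -> T -> T) (t : g -> g -> T) (c : g -> T)
  (HT : is_qtensor q brg brT t c)
  (TQ : lmodType R) (brTQ : TQ -> TQ -> TQ) (tQ : Q -> Q -> TQ) (cQ : Q -> TQ)
  (HTQ : is_qtensor q brQ brTQ tQ cQ)
  (* i : Gamma(Q) -> g (x)^q g, gamma(x + g#g) |-> x (x) x *)
  (i : G -> T) (Hi : lin i) (Hi_def : forall x, i (ga (pi x)) = t x x)
  (* p : g (x)^q g -> Q (x)^q Q, the map induced by pi *)
  (p : T -> TQ) (Hp : lie_hom brT brTQ p)
  (Hp_t : forall h k, p (t h k) = tQ (pi h) (pi k))
  (Hp_c : forall h, p (c h) = cQ (pi h)) :
  forall y : T, (exists x : G, y = i x) -> p y = 0 -> y = 0.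
Proof.
move=> y [x ->] hpy.
have [J [e [span indep]]] := Hfree.
have [pi_lin [pi_surj pi_ker]] := Hpi.
have Qk : forall a : Q, a *+ q = 0.
  move=> a; have [z <-] := pi_surj a.
  rewrite -(lin_Mn pi_lin); apply/pi_ker => P _ _ Hq; exact: Hq z.
have brQ0 : forall a b, brQ a b = 0.
  move=> a b; have [z <-] := pi_surj a; have [w <-] := pi_surj b.
  rewrite -Hpihom.2; apply/pi_ker => P _ Hb _; exact: Hb z w.
have [Tlie [Trel Tuniv]] := HT.
have [_ [_ [_ [_ [_ [_ Tq]]]]]] := Trel.
have ttk : forall z, t z z *+ q = 0.
  move=> z; move: Tq; case: eqP => [-> _|_ [_ [hc8 [_ hc10]]]]; first by rewrite mulr0n.
  rewrite -hc10 (lie_alt Hg).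
  have := hc8 0 0 z z; rewrite !scale0r addr0 => ->; by rewrite addr0.
set k := fun a => i (ga a).
have hk : gamma_rel k by apply: gamma_comp => //; exact: HG.1.
have kk : forall a, k a *+ q = 0.
  by move=> a; have [z <-] := pi_surj a; rewrite /k Hi_def.
have HBl := Bf_linl span indep hk Qk kk.
have HBr := Bf_linr span indep hk Qk kk.
have HBd := Bf_diag span indep hk Qk kk.
have lie0 : lie_axioms (fun _ _ : T => 0).
  split=> *; by rewrite ?scaler0 ?addr0.
have rel0 : qtens_rel q brQ (fun _ _ : T => 0) (Bf span k) (fun _ => 0).
  split; [|split; [|split; [|split; [|split; [|split]]]]].
  - move=> l h g0; have /= -> := lin_scale (HBl g0) l h.
    by have /= -> := lin_scale (HBr h) l g0.
  - by move=> h h' g0; have /= -> := lin_add (HBl g0) h h'.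
  - by move=> h g0 g'; rewrite (lin_add (HBr h)).
  - move=> h h' g0; rewrite !brQ0 !(lin0 (HBr _)).
    by rewrite subrr; have /= -> := lin0 (HBl g0).
  - move=> h g0 g'; rewrite !brQ0 (lin0 (HBr _)).
    by have /= -> := lin0 (HBl g0); have /= -> := lin0 (HBl g'); rewrite subrr.
  - by move=> h g0 h' g'; rewrite !brQ0 (lin0 (HBr _)).
  - case: eqP => // _; split; [|split; [|split]].
    + move=> h' h g0; rewrite !brQ0 (lin0 (HBr _)).
      by have /= -> := lin0 (HBl g0); rewrite addr0.
    + by move=> *; rewrite !scaler0 addr0.
    + move=> h h'; rewrite Qk.
      by have /= -> := lin0 (HBl (h' *+ q)).
    + move=> h g0; have /= <- := lin_Mn (HBl g0) h q.
      by rewrite Qk; have /= -> := lin0 (HBl g0).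
have [phi [[phi_lin _] [phi_t _]]] := HTQ.2.2 T _ _ _ lie0 rel0.
have [phiG [_ [_ uG]]] := HG.2 T k hk.
have E1 := uG i Hi (fun a => erefl).
have E2 := uG (fun z => phi (p (i z))) (lin_comp Hi (lin_comp Hp.1 phi_lin)).
rewrite E1 -E2; first by rewrite hpy (lin0 phi_lin).
move=> a; have [z <-] := pi_surj a.
by rewrite Hi_def Hp_t phi_t HBd.
Qed.
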